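(* Let $\lambda\in(0,1)$ and let $p:[1,\infty)\to(0,\infty)$ be continuously differentiable with $p(t)$ non-increasing and tending to $0$, and $p(t)\ln t$ non-decreasing and tending to $+\infty$ as $t\to\infty$. Put $s_j=p(j)\ln j$. Then $$\sum_{j=1}^N\lambda^{s_j}\ \sim\ N^{1+p(N)\ln\lambda}\qquad\text{as }N\to\infty,$$ i.e. the ratio of the two sides tends to $1$. *)

(* Defs.v *)
From Stdlib Require Import Reals.
Open Scope R_scope.

Fixpoint sum_from_1 (f : nat -> R) (N : nat) : R :=
  match N with
  | O => 0
  | S n => sum_from_1 f n + f (S n)
  end.

Definition C1_on_from_1 (p : R -> R) : Prop :=
  exists p' : R -> R,
    (forall t, 1 <= t -> derivable_pt_lim p t (p' t)) /\
    (forall t, 1 <= t -> continuity_pt p' t).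

(* Main.v *)
Require Import Defs.
From Stdlib Require Import Reals Lra Lia.
Open Scope R_scope.

Lemma exp_ge1 (u : R) : 1 + u <= exp u.
Proof.
  destruct (Req_dec u 0) as [->|H].
  - rewrite exp_0; lra.
  - left; apply exp_ineq1; exact H.
Qed.

Lemma amgm_exp (b L : R) : 0 <= b <= 1 -> exp (b * L) <= b * exp L + (1 - b).
Proof.
  intros Hb.
  pose proof (exp_ge1 ((1 - b) * L)) as H1.
  pose proof (exp_ge1 (- b * L)) as H2.
  assert (Hs : 1 <= b * exp ((1 - b) * L) + (1 - b) * exp (- b * L)) by nra.
  assert (E1 : exp ((1 - b) * L) * exp (b * L) = exp L).
  { rewrite <- exp_plus; f_equal; ring. }
  assert (E2 : exp (- b * L) * exp (b * L) = 1).
  { rewrite <- exp_plus. replace (- b * L + b * L) with 0 by ring. apply exp_0. }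
  pose proof (exp_pos (b * L)).
  assert (exp (b * L) * 1 <= exp (b*L) * (b * exp ((1 - b) * L) + (1 - b) * exp (- b * L))).
  { apply Rmult_le_compat_l; lra. }
  nra.
Qed.

Lemma step_ineq (x a : R) : 1 <= x -> 0 < a < 1 ->
  (1 - a) * exp (- a * ln (x + 1)) <= exp ((1 - a) * ln (x + 1)) - exp ((1 - a) * ln x).
Proof.
  intros Hx Ha.
  set (A := ln (x + 1)).
  set (d := A - ln x).
  set (E := exp ((1 - a) * A)).
  set (y := exp (- d)).
  assert (Hy : y = x / (x + 1)).
  { unfold y, d, A. replace (- (ln (x + 1) - ln x)) with (ln x + - ln (x+1)) by ring.
    assert (0 < / (x+1)) by (apply Rinv_0_lt_compat; lra).
    rewrite exp_plus, <- ln_Rinv by lra. rewrite (exp_ln x) by lra. rewrite exp_ln by lra.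
    unfold Rdiv; reflexivity. }
  assert (HA : exp (- a * A) = E * (1 - y)).
  { unfold E. rewrite Hy.
    replace (- a * A) with ((1 - a) * A + - A) by ring.
    rewrite exp_plus. f_equal. unfold A. rewrite <- ln_Rinv by lra. rewrite exp_ln.
    - field; lra.
    - apply Rinv_0_lt_compat; lra. }
  assert (HB : exp ((1 - a) * ln x) = E * exp ((1 - a) * (- d))).
  { unfold E. rewrite <- exp_plus. f_equal. unfold d; ring. }
  rewrite HA, HB.
  pose proof (amgm_exp (1 - a) (- d) ltac:(lra)) as Hg.
  fold y in Hg.
  assert (0 < E) by apply exp_pos.
  assert (E * exp ((1 - a) * - d) <= E * ((1 - a) * y + (1 - (1 - a)))).
  { apply Rmult_le_compat_l; lra. }
  nra.
Qed.

Lemma sum_upper (a : R) (N : nat) : 0 < a < 1 -> (1 <= N)%nat ->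
  sum_from_1 (fun j => exp (- a * ln (INR j))) N <= (exp ((1 - a) * ln (INR N)) - a) / (1 - a).
Proof.
  intros Ha HN. induction HN as [|N HN IH].
  - simpl. rewrite Rplus_0_l. change (INR 1) with 1. rewrite ln_1, !Rmult_0_r, exp_0.
    apply Req_le; field; lra.
  - cbn [sum_from_1]. rewrite S_INR.
    assert (1 <= INR N) by (apply (le_INR 1); exact HN).
    pose proof (step_ineq (INR N) a H Ha).
    apply Rmult_le_reg_l with (1 - a); [lra|].
    apply Rle_trans with ((1 - a) * ((exp ((1 - a) * ln (INR N)) - a) / (1 - a)) + (1 - a) * exp (- a * ln (INR N + 1))).
    + rewrite Rmult_plus_distr_l. apply Rplus_le_compat_r. apply Rmult_le_compat_l; lra.
    + replace ((1 - a) * ((exp ((1 - a) * ln (INR N)) - a) / (1 - a))) with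
        (exp ((1 - a) * ln (INR N)) - a) by (field; lra).
      replace ((1 - a) * ((exp ((1 - a) * ln (INR N + 1)) - a) / (1 - a))) with
        (exp ((1 - a) * ln (INR N + 1)) - a) by (field; lra).
      lra.
Qed.

Lemma sum_lower (f : nat -> R) (m : R) (N : nat) :
  (forall j, (1 <= j <= N)%nat -> m <= f j) -> INR N * m <= sum_from_1 f N.
Proof.
  induction N as [|N IH]; intros H.
  - simpl; lra.
  - cbn [sum_from_1]. rewrite S_INR.
    assert (INR N * m <= sum_from_1 f N) by (apply IH; intros j Hj; apply H; lia).
    assert (m <= f (S N)) by (apply H; lia). lra.
Qed.

Lemma sum_mono (f g : nat -> R) (N : nat) :
  (forall j, (1 <= j <= N)%nat -> f j <= g j) -> sum_from_1 f N <= sum_from_1 g N.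
Proof.
  induction N as [|N IH]; intros H.
  - simpl; lra.
  - cbn [sum_from_1].
    assert (sum_from_1 f N <= sum_from_1 g N) by (apply IH; intros j Hj; apply H; lia).
    assert (f (S N) <= g (S N)) by (apply H; lia). lra.
Qed.

Lemma ratio_bounds (lam : R) (p : R -> R) (n : nat)
  (Hlam : 0 < lam < 1)
  (Hpos : forall t, 1 <= t -> 0 < p t)
  (Hdec : forall s t, 1 <= s -> s <= t -> p t <= p s)
  (Hinc : forall s t, 1 <= s -> s <= t -> p s * ln s <= p t * ln t)
  (Hn : (1 <= n)%nat) (Ha : - ln lam * p (INR n) < 1) :
  let a := - ln lam * p (INR n) in
  let S := sum_from_1 (fun j => Rpower lam (p (INR j) * ln (INR j))) n in
  let D := Rpower (INR n) (1 + p (INR n) * ln lam) in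
  0 < D /\ D <= S /\ S <= D / (1 - a) /\ 0 < a.
Proof.
  intros a S D.
  set (x := INR n).
  assert (Hx : 1 <= x) by (apply (le_INR 1); exact Hn).
  assert (Hl : ln lam < 0).
  { rewrite <- ln_1. apply ln_increasing; lra. }
  assert (Hpx := Hpos x Hx).
  assert (Hapos : 0 < a) by (unfold a; fold x; nra).
  assert (HD : D = exp ((1 - a) * ln x)).
  { unfold D, Rpower, a; fold x. f_equal. ring. }
  assert (Hjx : forall j, (1 <= j <= n)%nat -> 1 <= INR j <= x).
  { intros j Hj; split; [apply (le_INR 1)|apply le_INR]; lia. }
  split; [rewrite HD; apply exp_pos|]. split.
  - assert (Hlow : forall j, (1 <= j <= n)%nat ->
        exp (- a * ln x) <= Rpower lam (p (INR j) * ln (INR j))).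
    { intros j Hj. destruct (Hjx j Hj) as [H1 H2]. unfold Rpower.
      assert (p (INR j) * ln (INR j) <= p x * ln x) by (apply Hinc; lra).
      assert (- a * ln x <= p (INR j) * ln (INR j) * ln lam).
      { unfold a; fold x. nra. }
      destruct H0; [left; apply exp_increasing; exact H0| rewrite H0; lra]. }
    pose proof (sum_lower _ _ n Hlow) as Hs. fold S in Hs. change (INR n) with x in Hs.
    replace (x * exp (- a * ln x)) with D in Hs; [exact Hs|].
    rewrite HD. rewrite <- (exp_ln x) at 2 by lra. rewrite <- exp_plus. f_equal. ring.
  - assert (Hup : forall j, (1 <= j <= n)%nat ->
        Rpower lam (p (INR j) * ln (INR j)) <= exp (- a * ln (INR j))).
    { intros j Hj. destruct (Hjx j Hj) as [H1 H2]. unfold Rpower.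
      assert (p x <= p (INR j)) by (apply Hdec; lra).
      assert (0 <= ln (INR j)).
      { destruct H1 as [H1|H1]. left; rewrite <- ln_1; apply ln_increasing; lra.
        rewrite <- H1, ln_1; lra. }
      assert (Hq : p (INR j) * ln (INR j) * ln lam <= - a * ln (INR j)).
      { unfold a; fold x.
        assert (0 <= (p (INR j) - p x) * ln (INR j)) by (apply Rmult_le_pos; lra). nra. }
      destruct Hq as [Hq|Hq]; [left; apply exp_increasing; exact Hq| rewrite Hq; lra]. }
    pose proof (sum_mono _ _ n Hup) as Hs. fold S in Hs.
    pose proof (sum_upper a n (conj Hapos Ha) Hn) as Hu. fold x in Hu. rewrite <- HD in Hu.
    split; [|exact Hapos].
    apply Rle_trans with ((D - a) / (1 - a)); [exact (Rle_trans _ _ _ Hs Hu)|].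
    unfold Rdiv. apply Rmult_le_compat_r; [left; apply Rinv_0_lt_compat; unfold a; lra|lra].
Qed.

Theorem mainTheorem8 (lam : R) (p : R -> R)
  (Hlam : 0 < lam < 1)
  (Hc1 : C1_on_from_1 p)
  (Hpos : forall t, 1 <= t -> 0 < p t)
  (Hdec : forall s t, 1 <= s -> s <= t -> p t <= p s)
  (Hlim0 : forall eps, 0 < eps -> exists M, forall t, M <= t -> Rabs (p t) < eps)
  (Hinc : forall s t, 1 <= s -> s <= t -> p s * ln s <= p t * ln t)
  (Hliminf : forall A, exists M, forall t, M <= t -> A < p t * ln t) :
  Un_cv (fun N : nat =>
           sum_from_1 (fun j => Rpower lam (p (INR j) * ln (INR j))) N
           / Rpower (INR N) (1 + p (INR N) * ln lam)) 1.
Proof.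
  intros eps Heps.
  assert (Hl : ln lam < 0) by (rewrite <- ln_1; apply ln_increasing; lra).
  set (c := - ln lam).
  assert (Hc : 0 < c) by (unfold c; lra).
  set (e' := Rmin (/ (2 * c)) (eps / (4 * c))).
  assert (He1 : e' <= / (2 * c)) by apply Rmin_l.
  assert (He2 : e' <= eps / (4 * c)) by apply Rmin_r.
  assert (He' : 0 < e').
  { unfold e'. apply Rmin_glb_lt; [apply Rinv_0_lt_compat; lra|].
    unfold Rdiv; apply Rmult_lt_0_compat; [lra|apply Rinv_0_lt_compat; lra]. }
  destruct (Hlim0 e' He') as [M HM].
  destruct (INR_unbounded (Rmax M 1)) as [N0 HN0].
  exists N0. intros n Hn. unfold R_dist.
  assert (Hnx : Rmax M 1 < INR n).
  { apply Rlt_le_trans with (INR N0); [lra|apply le_INR; lia]. }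
  assert (HM1 := Rmax_l M 1). assert (H11 := Rmax_r M 1).
  assert (Hn1 : (1 <= n)%nat).
  { destruct n; [simpl in Hnx; lra|lia]. }
  assert (Hx1 : 1 <= INR n) by lra.
  assert (Hp := HM (INR n) ltac:(lra)).
  assert (Hpp := Hpos (INR n) Hx1).
  rewrite Rabs_pos_eq in Hp by lra.
  assert (Hce1 : c * e' <= / 2).
  { apply Rle_trans with (c * / (2 * c)); [apply Rmult_le_compat_l; lra|].
    right; field; lra. }
  assert (Hce2 : c * e' <= eps / 4).
  { apply Rle_trans with (c * (eps / (4 * c))); [apply Rmult_le_compat_l; lra|].
    right; field; lra. }
  assert (Ha : c * p (INR n) < c * e') by (apply Rmult_lt_compat_l; lra).
  destruct (ratio_bounds lam p n Hlam Hpos Hdec Hinc Hn1 ltac:(fold c; lra))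
    as [HD [HDS [HSD Hap]]].
  revert HD HDS HSD Hap. fold c.
  set (S := sum_from_1 _ n). set (D := Rpower _ _). set (a := c * p (INR n)).
  intros HD HDS HSD Hap.
  assert (Hr1 : 1 <= S / D).
  { apply Rmult_le_reg_r with D; [exact HD|]. unfold Rdiv.
    rewrite Rmult_assoc, Rinv_l by lra. lra. }
  assert (Hr2 : S / D <= / (1 - a)).
  { apply Rmult_le_reg_r with D; [exact HD|]. unfold Rdiv.
    rewrite Rmult_assoc, Rinv_l by lra. unfold Rdiv in HSD. lra. }
  rewrite Rabs_pos_eq by lra.
  assert (Ha' : a < c * e') by exact Ha.
  assert (Hinv : / (1 - a) <= 1 + 2 * a).
  { apply Rmult_le_reg_r with (1 - a); [lra|].
    rewrite Rinv_l by lra. assert (0 <= a * (1 - 2*a)) by (apply Rmult_le_pos; lra). nra. }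
  lra.
Qed.
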